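(* Assume $\mathbb P(T(X)>1-\alpha)>0$, that the law of $X$ is non-atomic, that for every $C\in\mathcal I$ the random variable $p_C(X)$ has a continuous, non-atomic distribution, and that for every distinct $C_1,C_2\in\mathcal I$ any nontrivial linear combination of $p_{C_1}(X)$ and $p_{C_2}(X)$ has a non-atomic distribution. Then: (1) $\mu^*=\min\{\mu\ge 0: G(D^\mu,C^\mu)\le 0\}$ exists and is finite; (2) $(D^{\mu^*},C^{\mu^*})$ is an optimal solution of the problem of maximizing $\Pi(D,C)$ over all $D:\mathcal X\to\{0,1\}$, $C:\mathcal X\to\mathcal I$ subject to $G(D,C)\le 0$.
   Context: Let $(X,Y)\sim P_{XY}$ on $\mathcal X\times\mathcal Y$, $\alpha\in(0,1)$. $\mathcal I$ is a finite collection of subsets of $\mathcal Y$ enumerated in a fixed lexicographic order, and $w:\mathcal I\to(0,B)$ is a bounded positive weight. For $x\in\mathcal X$, $C\in\mathcal I$ write $p_C(x)=\mathbb P(Y\in C\mid X=x)$, and for $\mu\ge0$ let $\ell_{x,C}(\mu)=w(C)p_C(x)+\mu(p_C(x)-(1-\alpha))$ and $\mathcal U_x(\mu)=\max_{C\in\mathcal I}\ell_{x,C}(\mu)$. $C^\mu(x)$ is a maximizer of $\ell_{x,C}(\mu)$ over $C\in\mathcal I$, ties broken in favor of the largest $w(C)$ and then the smallest index in the ordering; $D^\mu(x)=\mathbb 1\{\mathcal U_x(\mu)\ge 0\}$. $T(x)=\max_{C\in\mathcal I}p_C(x)$. For $D:\mathcal X\to\{0,1\}$, $C:\mathcal X\to\mathcal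 I$: $\Pi(D,C)=\mathbb E[w(C(X))p_{C(X)}(X)D(X)]$ and $G(D,C)=\mathbb E[(1-p_{C(X)}(X)-\alpha)D(X)]$. *)

(* Defs.v *)
From HB Require Import structures.
From mathcomp Require Import all_boot all_order all_algebra.
From mathcomp Require Import all_classical all_reals all_analysis.
Set Implicit Arguments. Unset Strict Implicit. Unset Printing Implicit Defensive.
Import Order.TTheory GRing.Theory Num.Theory.
Local Open Scope classical_set_scope.
Local Open Scope ring_scope.

Section Defs.
Context {R : realType} {dX dY : measure_display}
  {X : measurableType dX} {Y : measurableType dY}.

(* p_C(x) = P(Y in C | X = x), realised through a probability kernel k
   (a regular conditional distribution of Y given X). *)
Definition pC (k : R.-pker X ~> Y) (C : set Y) (x : X) : R := fine (k x C).

(* The collection I = {Is i | i : 'I_n.+1}, enumerated by the index order. *)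
Definition ell n (k : R.-pker X ~> Y) (Is : 'I_n.+1 -> set Y)
  (w : 'I_n.+1 -> R) (alpha : R) (x : X) (i : 'I_n.+1) (mu : R) : R :=
  w i * pC k (Is i) x + mu * (pC k (Is i) x - (1 - alpha)).

Definition Ux n k Is w alpha (x : X) (mu : R) : R :=
  \big[Num.max/@ell n k Is w alpha x ord0 mu]_(i < n.+1) ell k Is w alpha x i mu.

Definition is_maximizer n k Is w alpha (x : X) (mu : R) (i : 'I_n.+1) : bool :=
  [forall j, @ell n k Is w alpha x j mu <= ell k Is w alpha x i mu].

Definition Cmu n k Is w alpha (mu : R) (x : X) : 'I_n.+1 :=
  odflt ord0 [pick i | [&& @is_maximizer n k Is w alpha x mu i,
     [forall j, is_maximizer k Is w alpha x mu j ==> (w j <= w i)] &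
     [forall j, (is_maximizer k Is w alpha x mu j && (w j == w i))
                  ==> (i <= j)%N]]].

Definition Dmu n k Is w alpha (mu : R) (x : X) : bool :=
  0 <= @Ux n k Is w alpha x mu.

Definition Tmax n (k : R.-pker X ~> Y) (Is : 'I_n.+1 -> set Y) (x : X) : R :=
  \big[Num.max/pC k (Is ord0) x]_(i < n.+1) pC k (Is i) x.

Definition Pi n (PX : probability X R) (k : R.-pker X ~> Y)
  (Is : 'I_n.+1 -> set Y) (w : 'I_n.+1 -> R)
  (D : X -> bool) (C : X -> 'I_n.+1) : \bar R :=
  (\int[PX]_x (w (C x) * pC k (Is (C x)) x * (D x)%:R)%:E)%E.

Definition G n (PX : probability X R) (k : R.-pker X ~> Y)
  (Is : 'I_n.+1 -> set Y) (alpha : R)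
  (D : X -> bool) (C : X -> 'I_n.+1) : \bar R :=
  (\int[PX]_x ((1 - pC k (Is (C x)) x - alpha) * (D x)%:R)%:E)%E.

Definition measurable_rule n (D : X -> bool) (C : X -> 'I_n.+1) : Prop :=
  measurable (D @^-1` [set true]) /\ forall i, measurable (C @^-1` [set i]).

Definition nonatomic (mu : set X -> \bar R) : Prop :=
  forall A, measurable A -> (0 < mu A)%E ->
    exists B, [/\ measurable B, B `<=` A & (0 < mu B < mu A)%E].

End Defs.

(* Main.v *)
Require Import Defs.
From HB Require Import structures.
From mathcomp Require Import all_boot all_order all_algebra.
From mathcomp Require Import all_classical all_reals all_analysis.
From mathcomp Require Import measurable_realfun.
From mathcomp Require Import ring lra.
Import Order.TTheory GRing.Theory Num.Theory.
Local Open Scope classical_set_scope.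
Local Open Scope ring_scope.

Section Generic.
Context {d : measure_display} {X : measurableType d} {R : realType}.

Lemma fib_meas (I : finType) (b : I -> X -> bool)
  (hb : forall i, measurable [set x | b i x]) (U : Type)
  (g : {ffun I -> bool} -> U) (S : set U) :
  measurable [set x | S (g [ffun i => b i x])].
Proof.
have -> : [set x | S (g [ffun i => b i x])] =
   \bigcup_(t in [set t | S (g t)]) \bigcap_(i in [set: I]) [set x | b i x = t i].
  apply/seteqP; split => x /=.
  - move=> Sx; exists [ffun i => b i x] => //= i _; by rewrite ffunE.
  - move=> [t St Ht].
    have -> : [ffun i => b i x] = t by apply/ffunP => i; rewrite ffunE; exact: Ht.
    done.
apply: fin_bigcup_measurable; first exact: finite_finset.
move=> t _; apply: fin_bigcap_measurable; first exact: finite_finset.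
move=> i _; case: (t i); first exact: hb i.
rewrite (_ : [set x | b i x = false] = ~` [set x | b i x]); first exact: measurableC.
apply/seteqP; split=> x /=; first by move=> ->.
by move/negP/negbTE.
Qed.

Lemma fib_meas1 (I : finType) (b : I -> X -> bool)
  (hb : forall i, measurable [set x | b i x]) (U : Type)
  (g : {ffun I -> bool} -> U) (u : U) :
  measurable [set x | g [ffun i => b i x] = u].
Proof. exact: (@fib_meas I b hb U g (fun v : U => v = u)). Qed.

Lemma meas_le (f g : X -> R) : measurable_fun setT f -> measurable_fun setT g ->
  measurable [set x | f x <= g x].
Proof.
move=> mf mg; have h := measurable_fun_ler mf mg measurableT.
rewrite (_ : [set x | f x <= g x] = [set: X] `&` (fun x => f x <= g x) @^-1` [set true]).
  by apply: h.
by apply/seteqP; split => x //= [].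
Qed.

Lemma meas_sel (T : finType) (v : X -> T) (f : T -> X -> R) :
  (forall t, measurable [set x | v x = t]) -> (forall t, measurable_fun setT (f t)) ->
  measurable_fun setT (fun x => f (v x) x).
Proof.
move=> hv hf.
have -> : (fun x => f (v x) x) = (fun x => \sum_(t <- enum T) (\1_[set y | v y = t] x * f t x)).
  apply/funext => x; rewrite (bigD1_seq (v x)) ?mem_enum ?enum_uniq //=.
  rewrite indicE mem_set // mul1r big1_seq ?addr0 // => t /andP [tv _].
  rewrite indicE memNset ?mul0r //= => vt; by rewrite vt eqxx in tv.
apply: measurable_sum => t; apply: measurable_funM => //.
Qed.

Lemma bnd_integrable (mu : {finite_measure set X -> \bar R}) (f : X -> R) (M : R) :
  measurable_fun setT f -> (forall x, `|f x| <= M) -> mu.-integrable setT (EFin \o f).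
Proof.
move=> mf hM; apply: measurable_bounded_integrable => //.
  by apply: fin_num_fun_lty; exact: fin_num_measure.
rewrite /bounded_near; near=> M' => t _; apply: le_trans (hM t) _.
by near: M'; apply: nbhs_pinfty_ge; exact: num_real.
Unshelve. all: end_near. Qed.

End Generic.

Lemma bigmax_argex {R : realType} (m : nat) (F : 'I_m.+1 -> R) :
  exists2 i, \big[Num.max/F ord0]_(j < m.+1) F j = F i & forall j, F j <= F i.
Proof.
case: (@arg_maxP _ _ _ ord0 xpredT F isT) => i _ hi.
exists i => //; last by move=> j; exact: hi.
apply/le_anti/andP; split; first by apply: bigmax_le => [|j _]; exact: hi.
exact: le_bigmax.
Qed.

Lemma lex_exists {R : realType} (m : nat) (M : pred 'I_m.+1) (w : 'I_m.+1 -> R) :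
  (exists i, M i) -> exists i, [&& M i, [forall j, M j ==> (w j <= w i)] &
     [forall j, (M j && (w j == w i)) ==> (i <= j)%N]].
Proof.
case=> i0 Mi0.
case: (@arg_maxP _ _ _ i0 M w Mi0) => i1 Mi1 hi1.
have P1 : M i1 && (w i1 == w i1) by rewrite Mi1 eqxx.
case: (@arg_minnP _ i1 (fun j => M j && (w j == w i1)) (fun j => nat_of_ord j) P1).
move=> i2 /andP[Mi2 /eqP wi2] hi2.
exists i2; apply/and3P; split => //.
- by apply/forallP => j; apply/implyP => Mj; rewrite wi2; exact: hi1.
- apply/forallP => j; apply/implyP => /andP[Mj wj]; apply: hi2.
  by rewrite Mj -wi2.
Qed.

Section RealAux.
Context {R : realType}.

Definition closeto (u : nat -> R) (mu0 : R) :=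
  forall e, 0 < e -> \forall m \near \oo, `|u m - mu0| < e.

Lemma sgn_stab (A Bc mu0 : R) (u : nat -> R) :
  A + mu0 * Bc != 0 -> closeto u mu0 ->
  \forall m \near \oo, (0 <= A + u m * Bc) = (0 <= A + mu0 * Bc).
Proof.
move=> hv hu.
set v := A + mu0 * Bc.
have s0 : 0 < `|Bc| + 1 by have := normr_ge0 Bc; lra.
have e0 : 0 < `|v| / (`|Bc| + 1) by rewrite divr_gt0 // normr_gt0.
apply: filterS (hu _ e0) => m hm.
have key : `|(A + u m * Bc) - v| < `|v|.
  rewrite /v (_ : A + u m * Bc - (A + mu0 * Bc) = (u m - mu0) * Bc); last by ring.
  rewrite normrM; apply: (le_lt_trans (y := `|u m - mu0| * (`|Bc| + 1))).
    by rewrite ler_wpM2l // lerDl.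
  by rewrite -ltr_pdivlMr.
move: key; rewrite ltr_norml => /andP[k1 k2].
case: (ltrgtP 0 v) => hv'.
- rewrite gtr0_norm // in k1 k2.
  have hz : 0 <= A + u m * Bc by rewrite /v in k1 hv'; lra.
  by rewrite hz ?(ltW hv').
- rewrite ltr0_norm // in k1 k2.
  have hz : A + u m * Bc < 0 by rewrite /v in k2 hv'; lra.
  by rewrite !leNgt hz ?hv'.
- by move: hv; rewrite -/v -hv' eqxx.
Qed.

Lemma sgn_inf (A Bc : R) : Bc != 0 ->
  \forall m \near \oo, (0 <= A + m%:R * Bc) = (0 < Bc).
Proof.
move=> hB.
have nB : 0 < `|Bc| by rewrite normr_gt0.
apply: filterS (nbhs_infty_gtr (`|A| / `|Bc|)) => m hm.
move: hm; rewrite ltr_pdivrMr // => hm.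
have hA1 : - `|A| <= A by have := ler_norm (- A); rewrite normrN; lra.
have hA2 : A <= `|A| by exact: ler_norm.
case: (ltrgtP 0 Bc) => hb.
- rewrite (gtr0_norm hb) in hm.
  have hz : 0 <= A + m%:R * Bc by lra.
  by rewrite hz ?hb.
- rewrite (ltr0_norm hb) in hm.
  have hz : A + m%:R * Bc < 0 by lra.
  by rewrite leNgt hz ?ltNge ?(ltW hb).
- by rewrite -hb eqxx in hB.
Qed.

Lemma close_of (u : nat -> R) mu0 K :
  (forall m, `|u m - mu0| <= K / m.+1%:R) -> closeto u mu0.
Proof.
move=> hb e e0; apply: filterS (nbhs_infty_gtr (K / e)) => m hm.
apply: le_lt_trans (hb m) _.
have m0 : (0 : R) < m.+1%:R by rewrite ltr0Sn.
rewrite ltr_pdivrMr //; move: hm; rewrite ltr_pdivrMr // => hm.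
rewrite -natr1 mulrDr mulr1; lra.
Qed.

Lemma ev_lt (u : nat -> \bar R) (L a : \bar R) : u @ \oo --> L -> (L < a)%E ->
  \forall m \near \oo, (u m < a)%E.
Proof. by move=> hu hL; exact: (hu _ (open_ereal_lt' hL)). Qed.

Lemma ev_gt (u : nat -> \bar R) (L a : \bar R) : u @ \oo --> L -> (a < L)%E ->
  \forall m \near \oo, (a < u m)%E.
Proof. by move=> hu hL; exact: (hu _ (open_ereal_gt' hL)). Qed.

Lemma lim_le0 (u : nat -> \bar R) L : u @ \oo --> L -> (forall m, (u m <= 0)%E) ->
  (L <= 0)%E.
Proof.
move=> hu hle; rewrite leNgt; apply/negP => hL.
have [m hm] := filter_ex (ev_gt _ _ _ hu hL).
by have := hle m; rewrite leNgt hm.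
Qed.

Lemma lim_ge0 (u : nat -> \bar R) L : u @ \oo --> L -> (forall m, (0 < u m)%E) ->
  (0 <= L)%E.
Proof.
move=> hu hle; rewrite leNgt; apply/negP => hL.
have [m hm] := filter_ex (ev_lt _ _ _ hu hL).
by have := hle m; rewrite ltNge (ltW hm).
Qed.

End RealAux.

Section Main.
Context {R : realType} {dX dY : measure_display} {X : measurableType dX}
  {Y : measurableType dY}.
Variables (PX : probability X R) (k : R.-pker X ~> Y) (n : nat)
  (Is : 'I_n.+1 -> set Y) (w : 'I_n.+1 -> R) (B alpha : R).
Hypotheses (ha : 0 < alpha < 1) (mIs : forall i, measurable (Is i))
  (hw : forall i, 0 < w i < B).

Local Notation p i x := (pC k (Is i) x).
Local Notation ellx x i mu := (ell k Is w alpha x i mu).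

Lemma p_bnd i x : 0 <= p i x <= 1.
Proof.
rewrite /pC.
have h0 : (0 <= k x (Is i))%E := measure_ge0 _ _.
have h1 : (k x (Is i) <= 1)%E.
  by rewrite -(@prob_kernel _ _ _ _ _ k x); apply: le_measure; rewrite ?inE.
by move: h0 h1; case: (k x (Is i)) => [r||] //=; rewrite !lee_fin => -> ->.
Qed.

Lemma mp i : measurable_fun setT (fun x => p i x).
Proof.
apply: (measurableT_comp (f := fine) (g := fun x => k x (Is i))) => //.
exact: (measurable_kernel k (Is i) (mIs i)).
Qed.

Lemma mell i mu : measurable_fun setT (fun x => ellx x i mu).
Proof.
rewrite /ell.
apply: measurable_funD; apply: measurable_funM => //; first exact: mp.
apply: measurable_funB => //; exact: mp.
Qed.

Definition bvec mu x : {ffun 'I_n.+1 * 'I_n.+1 -> bool} :=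
  [ffun ij => ellx x ij.1 mu <= ellx x ij.2 mu].
Definition dvec mu x : {ffun 'I_n.+1 -> bool} := [ffun i => 0 <= ellx x i mu].
Definition gC (t : {ffun 'I_n.+1 * 'I_n.+1 -> bool}) : 'I_n.+1 :=
  odflt ord0 [pick i | [&& [forall j, t (j, i)],
     [forall j, [forall j', t (j', j)] ==> (w j <= w i)] &
     [forall j, ([forall j', t (j', j)] && (w j == w i)) ==> (i <= j)%N]]].
Definition gD (t : {ffun 'I_n.+1 -> bool}) : bool := [exists i, t i].

Lemma ismax_code mu x :
  is_maximizer k Is w alpha x mu = fun i => [forall j, bvec mu x (j, i)].
Proof.
by apply/funext => i; rewrite /is_maximizer; apply: eq_forallb => j; rewrite ffunE.
Qed.

Lemma Cmu_code mu x : Cmu k Is w alpha mu x = gC (bvec mu x).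
Proof. by rewrite /Cmu ismax_code. Qed.

Lemma Dmu_code mu x : Dmu k Is w alpha mu x = gD (dvec mu x).
Proof.
rewrite /Dmu /Ux /gD.
have [i -> hi] := bigmax_argex _ (fun j => ellx x j mu).
apply/idP/existsP => [h|[j]]; first by exists i; rewrite ffunE.
by rewrite ffunE => hj; exact: le_trans hj (hi j).
Qed.

Lemma Cmu_max mu x j : ellx x j mu <= ellx x (Cmu k Is w alpha mu x) mu.
Proof.
rewrite /Cmu; case: pickP => [i /and3P[hm _ _] | hnone] /=.
  by move/forallP: hm => /(_ j).
exfalso.
have exM : exists i, is_maximizer k Is w alpha x mu i.
  have [i _ hi] := bigmax_argex _ (fun j => ellx x j mu).
  by exists i; apply/forallP => j'; exact: hi.
have [i0 hi0] := lex_exists _ _ w exM.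
by rewrite hnone in hi0.
Qed.

Lemma Ux_eq mu x : Ux k Is w alpha x mu = ellx x (Cmu k Is w alpha mu x) mu.
Proof.
rewrite /Ux; have [i -> hi] := bigmax_argex _ (fun j => ellx x j mu).
by apply/le_anti/andP; split; [exact: Cmu_max | exact: hi].
Qed.

Lemma mCfib mu i : measurable [set x | Cmu k Is w alpha mu x = i].
Proof.
rewrite (_ : [set x | _] = [set x | gC (bvec mu x) = i]); last first.
  by apply/seteqP; split => x /=; rewrite Cmu_code.
have hb : forall ij, measurable [set x | (fun ij x => ellx x ij.1 mu <= ellx x ij.2 mu) ij x].
  by move=> ij; exact: meas_le (mell _ _) (mell _ _).
exact: (@fib_meas1 _ _ _ _ hb _ gC i).
Qed.

Lemma mDfib mu b : measurable [set x | Dmu k Is w alpha mu x = b].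
Proof.
rewrite (_ : [set x | _] = [set x | gD (dvec mu x) = b]); last first.
  by apply/seteqP; split => x /=; rewrite Dmu_code.
have hb : forall i, measurable [set x | (fun i x => 0 <= ellx x i mu) i x].
  by move=> i; exact: meas_le (mell _ _).
exact: (@fib_meas1 _ _ _ _ hb _ gD b).
Qed.

Lemma mrule_mu mu : measurable_rule (Dmu k Is w alpha mu) (Cmu k Is w alpha mu).
Proof. split; [exact: (mDfib mu true) | exact: mCfib]. Qed.


Definition gint (D : X -> bool) (C : X -> 'I_n.+1) x : R :=
  (1 - p (C x) x - alpha) * (D x)%:R.
Definition pint (D : X -> bool) (C : X -> 'I_n.+1) x : R :=
  w (C x) * p (C x) x * (D x)%:R.

Lemma G_int D C : G PX k Is alpha D C = (\int[PX]_x (gint D C x)%:E)%E.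
Proof. by []. Qed.
Lemma Pi_int D C : Pi PX k Is w D C = (\int[PX]_x (pint D C x)%:E)%E.
Proof. by []. Qed.

Lemma rule_fib (D : X -> bool) (C : X -> 'I_n.+1) : measurable_rule D C ->
  forall t : 'I_n.+1 * bool, measurable [set x | (C x, D x) = t].
Proof.
move=> [mD mC] [i b].
have -> : [set x | (C x, D x) = (i, b)] = [set x | C x = i] `&` [set x | D x = b].
  by apply/seteqP; split => x /=; [case=> -> ->|case=> -> ->].
apply: measurableI; first exact: mC.
case: b; first exact: mD.
have -> : [set x | D x = false] = ~` (D @^-1` [set true]).
  by apply/seteqP; split=> x /=; [move->|move/negP/negbTE].
exact: measurableC.
Qed.


Lemma mgint D C : measurable_rule D C -> measurable_fun setT (gint D C).
Proof.
move=> hr.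
have hf : forall t : 'I_n.+1 * bool,
    measurable_fun setT (fun x => (1 - p t.1 x - alpha) * (t.2)%:R).
  move=> [i b] /=; apply: measurable_funM => //.
  apply: measurable_funB => //; apply: measurable_funB => //; exact: mp.
exact: (@meas_sel dX X R _ (fun x => (C x, D x)) _ (@rule_fib D C hr) hf).
Qed.

Lemma mpint D C : measurable_rule D C -> measurable_fun setT (pint D C).
Proof.
move=> hr.
have hf : forall t : 'I_n.+1 * bool,
    measurable_fun setT (fun x => w t.1 * p t.1 x * (t.2)%:R).
  move=> [i b] /=; apply: measurable_funM => //.
  apply: measurable_funM => //; exact: mp.
exact: (@meas_sel dX X R _ (fun x => (C x, D x)) _ (@rule_fib D C hr) hf).
Qed.

Lemma gint_bnd D C x : `|gint D C x| <= 1.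
Proof.
rewrite /gint; case: (D x); rewrite ?mulr1 ?mulr0 ?normr0 //.
have /andP[h0 h1] := p_bnd (C x) x; case/andP: ha => a0 a1.
rewrite ler_norml; apply/andP; split; lra.
Qed.

Lemma pint_bnd D C x : `|pint D C x| <= B.
Proof.
rewrite /pint; case: (D x); rewrite ?mulr1 ?mulr0 ?normr0 //; last first.
  by case/andP: (hw ord0) => h0 h1; lra.
have /andP[h0 h1] := p_bnd (C x) x; case/andP: (hw (C x)) => a0 a1.
rewrite ger0_norm; last by apply: mulr_ge0 => //; lra.
nra.
Qed.

Lemma lag_int (f g : X -> R) (a b mu : R) :
  measurable_fun setT f -> measurable_fun setT g ->
  (forall x, `|f x| <= a) -> (forall x, `|g x| <= b) ->
  (\int[PX]_x (f x - mu * g x)%:E = \int[PX]_x (f x)%:E - mu%:E * \int[PX]_x (g x)%:E)%E.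
Proof.
move=> mf mg hf hg.
have If : PX.-integrable setT (EFin \o f) := bnd_integrable PX _ _ mf hf.
have Ig : PX.-integrable setT (EFin \o g) := bnd_integrable PX _ _ mg hg.
have Imu : PX.-integrable setT (EFin \o (fun x => mu * g x)).
  apply: (@bnd_integrable _ _ _ PX _ (`|mu| * b)).
    by apply: measurable_funM.
  by move=> x; rewrite normrM ler_wpM2l.
under eq_integral do rewrite EFinB.
rewrite integralB_EFin //; congr (_ - _)%E.
under eq_integral do rewrite EFinM.
by rewrite integralZl.
Qed.

Lemma lag_pt D C mu x : 0 <= mu ->
  pint D C x - mu * gint D C x <=
  pint (Dmu k Is w alpha mu) (Cmu k Is w alpha mu) x
    - mu * gint (Dmu k Is w alpha mu) (Cmu k Is w alpha mu) x.
Proof.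
move=> mu0.
have E : forall D' C', pint D' C' x - mu * gint D' C' x = ellx x (C' x) mu * (D' x)%:R.
  by move=> D' C'; rewrite /pint /gint /ell; ring.
rewrite !E /Dmu Ux_eq.
have hC := Cmu_max mu x (C x).
set u := ellx x (Cmu k Is w alpha mu x) mu in hC *.
case: (D x); case: (lerP 0 u) => hu /=; rewrite ?mulr1 ?mulr0 //; lra.
Qed.


Lemma Lint mu (D : X -> bool) (C : X -> 'I_n.+1) : measurable_rule D C ->
  PX.-integrable setT (EFin \o (fun x => pint D C x - mu * gint D C x)).
Proof.
move=> hr; apply: (@bnd_integrable _ _ _ PX _ (B + `|mu|)).
  apply: measurable_funB; first exact: mpint.
  by apply: measurable_funM => //; exact: mgint.
move=> x; apply: le_trans (ler_normB _ _) _; apply: lerD; first exact: pint_bnd.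
by rewrite normrM -[leRHS]mulr1 ler_wpM2l // gint_bnd.
Qed.

Lemma opt mu (D : X -> bool) (C : X -> 'I_n.+1) : 0 <= mu -> measurable_rule D C ->
  (G PX k Is alpha D C <= 0)%E ->
  (mu%:E * G PX k Is alpha (Dmu k Is w alpha mu) (Cmu k Is w alpha mu) = 0)%E ->
  (Pi PX k Is w D C <= Pi PX k Is w (Dmu k Is w alpha mu) (Cmu k Is w alpha mu))%E.
Proof.
move=> mu0 hr hG hslack.
have hr' := mrule_mu mu.
rewrite !Pi_int; rewrite !G_int in hG hslack.
have L1 := lag_int _ _ _ _ mu (mpint _ _ hr) (mgint _ _ hr) (pint_bnd D C) (gint_bnd D C).
have L2 := lag_int _ _ _ _ mu (mpint _ _ hr') (mgint _ _ hr') (pint_bnd _ _) (gint_bnd _ _).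
have Hle : (\int[PX]_x (pint D C x - mu * gint D C x)%:E <=
  \int[PX]_x (pint (Dmu k Is w alpha mu) (Cmu k Is w alpha mu) x -
       mu * gint (Dmu k Is w alpha mu) (Cmu k Is w alpha mu) x)%:E)%E.
  apply: le_integral => //; [exact: Lint|exact: Lint|].
  by move=> x _; rewrite /= lee_fin; exact: lag_pt.
rewrite L1 L2 in Hle.
have fin (D' : X -> bool) C' (h : measurable_rule D' C') :
    ((\int[PX]_x (pint D' C' x)%:E)%E \is a fin_num) /\
    ((\int[PX]_x (gint D' C' x)%:E)%E \is a fin_num).
  split; apply: integrable_fin_num => //.
    exact: (bnd_integrable PX _ _ (mpint _ _ h) (pint_bnd D' C')).
  exact: (bnd_integrable PX _ _ (mgint _ _ h) (gint_bnd D' C')).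
have [f1 f2] := fin _ _ hr; have [f3 f4] := fin _ _ hr'.
move: Hle hG hslack; rewrite -(fineK f1) -(fineK f2) -(fineK f3) -(fineK f4).
rewrite -!EFinM -!EFinB !lee_fin => Hle hG /eqP; rewrite eqe => /eqP hs.
nra.
Qed.


Hypotheses (hp1 : forall i (t : R), PX [set x | pC k (Is i) x = t] = 0%E)
  (hp2 : forall i j, i != j -> forall (a b t : R), (a, b) != (0, 0) ->
     PX [set x | a * pC k (Is i) x + b * pC k (Is j) x = t] = 0%E).

Lemma meas_eq (f : X -> R) t : measurable_fun setT f -> measurable [set x | f x = t].
Proof.
move=> mf.
have -> : [set x | f x = t] = [set x | f x <= t] `&` [set x | t <= f x].
  apply/seteqP; split => x /=; first by move=> ->; rewrite lexx.
  by case=> h1 h2; apply/le_anti; rewrite h1 h2.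
by apply: measurableI; apply: meas_le.
Qed.

Lemma ae_null (P : X -> Prop) (S : set X) : measurable S -> PX S = 0%E ->
  (forall x, ~ S x -> P x) -> \forall x \ae PX, P x.
Proof.
move=> mS S0 hP; exists S; split => // x /= nP.
by apply: contrapT => nS; apply: nP; exact: hP.
Qed.

Definition good mu0 x := (forall i j, i != j -> ellx x i mu0 != ellx x j mu0) /\
  (forall i, ellx x i mu0 != 0).

Lemma ae_good mu0 : 0 <= mu0 -> \forall x \ae PX, good mu0 x.
Proof.
move=> mu0p.
have H1 : \forall x \ae PX, forall ij : 'I_n.+1 * 'I_n.+1,
    ij.1 != ij.2 -> ellx x ij.1 mu0 != ellx x ij.2 mu0.
  apply: filter_forall => -[i j] /=.
  case: (eqVneq i j) => [->|ij]; first by apply: aeW => x; rewrite eqxx.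
  apply: (@ae_null _ [set x | (w i + mu0) * p i x + (- (w j + mu0)) * p j x = 0]).
  - apply: meas_eq; apply: measurable_funD; apply: measurable_funM => //; exact: mp.
  - apply: hp2 => //; rewrite xpair_eqE; apply/negP => /andP[/eqP h _].
    by case/andP: (hw i) => h1 _; lra.
  - move=> x nS _; apply/eqP => he; apply: nS => /=.
    by move: he; rewrite /ell => he; lra.
have H2 : \forall x \ae PX, forall i, ellx x i mu0 != 0.
  apply: filter_forall => i.
  have hz : w i + mu0 != 0 by case/andP: (hw i) => h1 _; apply/eqP; lra.
  apply: (@ae_null _ [set x | p i x = mu0 * (1 - alpha) / (w i + mu0)]).
  - by apply: meas_eq; exact: mp.
  - exact: hp1.
  - move=> x nS; apply/eqP => he; apply: nS => /=.
    rewrite (_ : mu0 * (1 - alpha) = p i x * (w i + mu0)); first by rewrite mulfK.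
    by move: he; rewrite /ell => he; lra.
apply: filterS2 H1 H2 => x h1 h2; split => [i j ij|i]; [exact: (h1 (i, j) ij)|exact: h2].
Qed.

Lemma gint_stab (u : nat -> R) mu0 x : good mu0 x -> closeto u mu0 ->
  \forall m \near \oo,
    gint (Dmu k Is w alpha (u m)) (Cmu k Is w alpha (u m)) x =
    gint (Dmu k Is w alpha mu0) (Cmu k Is w alpha mu0) x.
Proof.
move=> [g1 g2] hu.
have h1 : \forall m \near \oo, forall ij : 'I_n.+1 * 'I_n.+1,
    (ellx x ij.1 (u m) <= ellx x ij.2 (u m)) = (ellx x ij.1 mu0 <= ellx x ij.2 mu0).
  apply: filter_forall => -[i j] /=.
  case: (eqVneq i j) => [->|ij]; first by apply: nearW => m; rewrite !lexx.
  have E mu : (ellx x i mu <= ellx x j mu) =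
      (0 <= (w j * p j x - w i * p i x) + mu * (p j x - p i x)).
    by rewrite -subr_ge0 /ell; congr (0 <= _); ring.
  have nz : (w j * p j x - w i * p i x) + mu0 * (p j x - p i x) != 0.
    apply/eqP => h; move/eqP: (g1 i j ij); apply; move: h; rewrite /ell => h; lra.
  have := sgn_stab _ _ _ _ nz hu; apply: filterS => m; by rewrite !E.
have h2 : \forall m \near \oo, forall i,
    (0 <= ellx x i (u m)) = (0 <= ellx x i mu0).
  apply: filter_forall => i.
  exact: (sgn_stab (w i * p i x) (p i x - (1 - alpha)) mu0 u (g2 i) hu).
apply: filterS2 h1 h2 => m H1 H2.
rewrite /gint !Cmu_code !Dmu_code.
have -> : bvec (u m) x = bvec mu0 x by apply/ffunP => ij; rewrite !ffunE H1.
have -> : dvec (u m) x = dvec mu0 x by apply/ffunP => i; rewrite !ffunE H2.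
by [].
Qed.

Lemma dom_cvg (F : nat -> X -> R) (f : X -> R) :
  (forall m, measurable_fun setT (F m)) -> measurable_fun setT f ->
  (forall m x, `|F m x| <= 1) ->
  (\forall x \ae PX, \forall m \near \oo, F m x = f x) ->
  (fun m => \int[PX]_x (F m x)%:E)%E @ \oo --> (\int[PX]_x (f x)%:E)%E.
Proof.
move=> mF mf hb hae.
have I1 : PX.-integrable setT (EFin \o (fun _ : X => (1 : R))).
  by apply: (@bnd_integrable _ _ _ PX _ 1) => // x; rewrite normr1.
have := @dominated_convergence _ _ _ PX setT measurableT
  (fun m x => (F m x)%:E) (fun x => (f x)%:E) (EFin \o (fun _ : X => (1 : R))).
case.
- by move=> m; apply/measurable_EFinP; exact: mF.
- by apply/measurable_EFinP.
- apply: filterS hae => x ev _; apply: cvg_near_cst.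
  by apply: filterS ev => m ->.
- exact: I1.
- by apply: aeW => x m _ /=; rewrite lee_fin.
- by move=> _ _ h; exact: h.
Qed.

Lemma G_seq (u : nat -> R) mu0 : 0 <= mu0 -> closeto u mu0 ->
  (fun m => G PX k Is alpha (Dmu k Is w alpha (u m)) (Cmu k Is w alpha (u m)))
    @ \oo --> G PX k Is alpha (Dmu k Is w alpha mu0) (Cmu k Is w alpha mu0).
Proof.
move=> mu0p hu.
apply: (@dom_cvg (fun m => gint (Dmu k Is w alpha (u m)) (Cmu k Is w alpha (u m)))).
- by move=> m; apply: mgint; exact: mrule_mu.
- by apply: mgint; exact: mrule_mu.
- by move=> m x; exact: gint_bnd.
- by apply: filterS (ae_good _ mu0p) => x hx; exact: gint_stab.
Qed.

Lemma meas_lt (f g : X -> R) : measurable_fun setT f -> measurable_fun setT g ->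
  measurable [set x | f x < g x].
Proof.
move=> mf mg.
have -> : [set x | f x < g x] = ~` [set x | g x <= f x].
  by apply/seteqP; split => x /=; rewrite ltNge => /negP.
exact/measurableC/meas_le.
Qed.

Definition binf x : {ffun 'I_n.+1 * 'I_n.+1 -> bool} :=
  [ffun ij => (ij.1 == ij.2) || (p ij.1 x < p ij.2 x)].
Definition dinf x : {ffun 'I_n.+1 -> bool} := [ffun i => 1 - alpha < p i x].
Definition Cinf x := gC (binf x).
Definition Dinf x := gD (dinf x).

Lemma mrule_inf : measurable_rule Dinf Cinf.
Proof.
split.
  have hb : forall i, measurable [set x | (fun i x => 1 - alpha < p i x) i x].
    by move=> i; apply: meas_lt => //; exact: mp.
  exact: (@fib_meas1 _ _ _ _ hb _ gD true).
move=> i.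
have hb : forall ij : 'I_n.+1 * 'I_n.+1, measurable
    [set x | (fun ij x => (ij.1 == ij.2) || (p ij.1 x < p ij.2 x)) ij x].
  move=> [a b] /=; case: (a == b) => /=.
    by rewrite (_ : [set x | true] = setT) //; apply/seteqP; split.
  by apply: meas_lt; exact: mp.
exact: (@fib_meas1 _ _ _ _ hb _ gC i).
Qed.

Definition good_inf x := (forall i j, i != j -> p i x != p j x) /\
  (forall i, p i x != 1 - alpha).

Lemma ae_good_inf : \forall x \ae PX, good_inf x.
Proof.
have H1 : \forall x \ae PX, forall ij : 'I_n.+1 * 'I_n.+1,
    ij.1 != ij.2 -> p ij.1 x != p ij.2 x.
  apply: filter_forall => -[i j] /=.
  case: (eqVneq i j) => [->|ij]; first by apply: aeW => x; rewrite eqxx.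
  apply: (@ae_null _ [set x | 1 * p i x + (-1) * p j x = 0]).
  - apply: meas_eq; apply: measurable_funD; apply: measurable_funM => //; exact: mp.
  - apply: hp2 => //; rewrite xpair_eqE; apply/negP => /andP[h _].
    by rewrite oner_eq0 in h.
  - move=> x nS _; apply/eqP => he; apply: nS => /=; lra.
have H2 : \forall x \ae PX, forall i, p i x != 1 - alpha.
  apply: filter_forall => i.
  apply: (@ae_null _ [set x | p i x = 1 - alpha]).
  - by apply: meas_eq; exact: mp.
  - exact: hp1.
  - by move=> x nS; apply/eqP.
apply: filterS2 H1 H2 => x h1 h2; split => [i j ij|i]; [exact: (h1 (i, j) ij)|exact: h2].
Qed.

Lemma stab_inf x : good_inf x ->
  \forall m \near \oo,
    gint (Dmu k Is w alpha m%:R) (Cmu k Is w alpha m%:R) x = gint Dinf Cinf x.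
Proof.
move=> [g1 g2].
have h1 : \forall m \near \oo, forall ij : 'I_n.+1 * 'I_n.+1,
    (ellx x ij.1 m%:R <= ellx x ij.2 m%:R) = binf x ij.
  apply: filter_forall => -[i j] /=; rewrite ffunE /=.
  case: (eqVneq i j) => [->|ij]; first by apply: nearW => m; rewrite !lexx.
  have E mu : (ellx x i mu <= ellx x j mu) =
      (0 <= (w j * p j x - w i * p i x) + mu * (p j x - p i x)).
    by rewrite -subr_ge0 /ell; congr (0 <= _); ring.
  have nz : p j x - p i x != 0 by rewrite subr_eq0 eq_sym; exact: g1.
  have := sgn_inf (w j * p j x - w i * p i x) _ nz.
  by apply: filterS => m; rewrite E subr_gt0.
have h2 : \forall m \near \oo, forall i, (0 <= ellx x i m%:R) = dinf x i.
  apply: filter_forall => i; rewrite ffunE.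
  have nz : p i x - (1 - alpha) != 0 by rewrite subr_eq0; exact: g2.
  have := sgn_inf (w i * p i x) _ nz.
  by apply: filterS => m; rewrite /ell subr_gt0.
apply: filterS2 h1 h2 => m H1 H2.
rewrite /gint !Cmu_code !Dmu_code /Cinf /Dinf.
have -> : bvec m%:R x = binf x by apply/ffunP => ij; rewrite ffunE H1.
have -> : dvec m%:R x = dinf x by apply/ffunP => i; rewrite ffunE H2.
by [].
Qed.

Lemma G_inf : (fun m : nat => G PX k Is alpha (Dmu k Is w alpha m%:R)
    (Cmu k Is w alpha m%:R)) @ \oo --> (\int[PX]_x (gint Dinf Cinf x)%:E)%E.
Proof.
apply: (@dom_cvg (fun m : nat => gint (Dmu k Is w alpha m%:R) (Cmu k Is w alpha m%:R))).
- by move=> m; apply: mgint; exact: mrule_mu.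
- by apply: mgint; exact: mrule_inf.
- by move=> m x; exact: gint_bnd.
- by apply: filterS ae_good_inf => x hx; exact: stab_inf.
Qed.


Lemma gC_unique (t : {ffun 'I_n.+1 * 'I_n.+1 -> bool}) (i : 'I_n.+1) : (forall j, [forall j', t (j', j)] = (j == i)) -> gC t = i.
Proof.
move=> H; rewrite /gC; case: pickP => [i' /and3P[h _ _] | hn] /=.
  by move: (H i'); rewrite h => /esym/eqP.
have : [&& [forall j, t (j, i)],
     [forall j, [forall j', t (j', j)] ==> (w j <= w i)] &
     [forall j, ([forall j', t (j', j)] && (w j == w i)) ==> (i <= j)%N]].
  rewrite H eqxx /=; apply/andP; split.
    by apply/forallP => j; rewrite H; apply/implyP => /eqP ->.
  by apply/forallP => j; rewrite H; apply/implyP => /andP[/eqP -> _].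
by rewrite hn.
Qed.

Lemma hinf_val x : good_inf x -> exists i, (forall j, p j x <= p i x) /\
  gint Dinf Cinf x = (1 - p i x - alpha) * ((1 - alpha < p i x)%R)%:R.
Proof.
move=> [g1 g2].
have [i _ hi] := bigmax_argex _ (fun j => p j x).
exists i; split => //.
have hC : Cinf x = i.
  apply: gC_unique => j; apply/forallP/eqP => [H|->].
    have := H i; rewrite ffunE /= => /orP[/eqP //|hlt].
    by have := hi j; rewrite leNgt hlt.
  move=> j'; rewrite ffunE /=; case: (eqVneq j' i) => //= hj.
  by rewrite lt_neqAle hi g1.
have hD : Dinf x = (1 - alpha < p i x).
  rewrite /Dinf /gD; apply/existsP/idP => [[j]|h]; last by exists i; rewrite ffunE.
  by rewrite ffunE => hj; exact: lt_le_trans hj (hi j).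
by rewrite /gint hC hD.
Qed.

Definition Aset e := [set x | gD [ffun i => 1 - alpha + e < p i x] = true].

Lemma mAset e : measurable (Aset e).
Proof.
have hb : forall i, measurable [set x | (fun i x => 1 - alpha + e < p i x) i x].
  by move=> i; apply: meas_lt => //; exact: mp.
exact: (@fib_meas1 _ _ _ _ hb _ gD true).
Qed.

Lemma Aset_iff e x : Aset e x <-> 1 - alpha + e < Tmax k Is x.
Proof.
rewrite /Aset /gD /=; have [i hT hi] := bigmax_argex _ (fun j => p j x).
rewrite /Tmax hT; split => [/existsP[j]|h]; last by apply/existsP; exists i; rewrite ffunE.
by rewrite ffunE => hj; exact: lt_le_trans hj (hi j).
Qed.

Hypothesis hT : (0 < PX [set x | (1 - alpha < Tmax k Is x)%R])%E.

Lemma exists_A : exists e : R, (0 < e <= 1) /\ (0 < PX (Aset e))%E.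
Proof.
case: (pselect (exists m : nat, (0 < PX (Aset (m.+1%:R^-1)))%E)) => [[m hm]|Hn].
  exists (m.+1%:R^-1); split => //; apply/andP; split.
    by rewrite invr_gt0 ltr0Sn.
  by rewrite invf_le1 ?ltr0Sn // ler1n.
exfalso.
have H0 m : PX (Aset m.+1%:R^-1) = 0.
  apply/eqP; rewrite eq_le measure_ge0 andbT leNgt; apply/negP => h.
  by apply: Hn; exists m.
have hneg : PX.-negligible (\bigcup_m Aset (m.+1%:R^-1)).
  apply: negligible_bigcup => m; apply/negligibleP; [exact: mAset|exact: H0].
have sub : [set x | 1 - alpha < Tmax k Is x] `<=` \bigcup_m Aset (m.+1%:R^-1).
  move=> x /= hx.
  have e0 : 0 < Tmax k Is x - (1 - alpha) by rewrite subr_gt0.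
  have [m hm] := filter_ex (near_infty_natSinv_lt (PosNum e0)).
  have hm' : m.+1%:R^-1 < Tmax k Is x - (1 - alpha) := hm.
  by exists m => //; apply/Aset_iff; rewrite -ltrBrDl.
have mT : measurable [set x | 1 - alpha < Tmax k Is x].
  rewrite (_ : [set x | _] = Aset 0); first exact: mAset.
  apply/seteqP; split => x /= h.
    by apply/Aset_iff; rewrite addr0.
  by move/Aset_iff: h; rewrite addr0.
have := negligibleS sub hneg; move/(negligibleP _ mT) => h.
by move: hT; rewrite h ltxx.
Qed.

Lemma int_inf_neg : (\int[PX]_x (gint Dinf Cinf x)%:E < 0)%E.
Proof.
have [e [/andP[e0 e1] hA]] := exists_A.
have mh : measurable_fun setT (gint Dinf Cinf) := mgint _ _ mrule_inf.
have mA := mAset e.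
have mI : measurable_fun setT (fun x => - e * \1_(Aset e) x).
  by apply: measurable_funM => //; exact: measurable_indic.
pose h2 := fun x => Num.min (gint Dinf Cinf x) (- e * \1_(Aset e) x).
have mh2 : measurable_fun setT h2 by exact: measurable_minr.
have bI : forall x, `|- e * \1_(Aset e) x| <= 1.
  move=> x; rewrite indicE; case: (x \in Aset e); rewrite ?mulr1 ?mulr0 ?normr0 //.
  by rewrite normrN ger0_norm // ltW.
have bh2 : forall x, `|h2 x| <= 1.
  move=> x; rewrite /h2; case: (lerP (gint Dinf Cinf x) (- e * \1_(Aset e) x)) => hl.
    exact: gint_bnd.
  exact: bI.
have eq : (\int[PX]_x (gint Dinf Cinf x)%:E = \int[PX]_x (h2 x)%:E)%E.
  apply: ae_eq_integral => //; [exact/measurable_EFinP|exact/measurable_EFinP|].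
  apply: filterS ae_good_inf => x gx _.
  have [i [hi hv]] := hinf_val x gx.
  congr EFin; rewrite /h2; apply/esym/min_l; rewrite hv indicE.
  case: (boolP (x \in Aset e)) => xa.
    move: xa; rewrite in_setE => /Aset_iff.
    have hT' : Tmax k Is x <= p i x.
      by apply: bigmax_le => // j _; exact: hi.
    move=> hx; have hc : 1 - alpha < p i x.
      apply: lt_le_trans hT'; apply: le_lt_trans hx; rewrite lerDl; exact: ltW.
    rewrite hc /= !mulr1; lra.
  rewrite mulr0; case: (ltrP (1 - alpha) (p i x)) => hc /=; rewrite ?mulr1 ?mulr0 //.
  lra.
have le : (\int[PX]_x (h2 x)%:E <= \int[PX]_x (- e * \1_(Aset e) x)%:E)%E.
  apply: le_integral => //.
  - exact: (bnd_integrable PX _ _ mh2 bh2).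
  - exact: (bnd_integrable PX _ _ mI bI).
  - by move=> x _; rewrite /= lee_fin /h2 ge_min lexx orbT.
have val : (\int[PX]_x (- e * \1_(Aset e) x)%:E = (- e)%:E * PX (Aset e))%E.
  under eq_integral do rewrite EFinM.
  rewrite integralZl //; first by rewrite integral_indic // setIT.
  apply: (@bnd_integrable _ _ _ PX _ 1); first exact: measurable_indic.
  by move=> x; rewrite indicE; case: (x \in Aset e); rewrite ?normr1 ?normr0.
have fin : PX (Aset e) \is a fin_num.
  rewrite ge0_fin_numE ?measure_ge0 //.
  exact: (le_lt_trans (probability_le1 PX mA)) (ltey _).
rewrite eq; apply: le_lt_trans le _; rewrite val -(fineK fin) -EFinM lte_fin.
have : 0 < fine (PX (Aset e)) by apply: fine_gt0; rewrite hA -ge0_fin_numE ?measure_ge0.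
nra.
Qed.

Lemma exists_neg : exists m : nat,
  (G PX k Is alpha (Dmu k Is w alpha m%:R) (Cmu k Is w alpha m%:R) < 0)%E.
Proof. exact: filter_ex (ev_lt _ _ _ G_inf int_inf_neg). Qed.


Lemma final : exists mustar : R,
    [/\ 0 <= mustar,
        (G PX k Is alpha (Dmu k Is w alpha mustar) (Cmu k Is w alpha mustar)
           <= 0)%E,
        (forall mu, 0 <= mu ->
           (G PX k Is alpha (Dmu k Is w alpha mu) (Cmu k Is w alpha mu)
              <= 0)%E -> mustar <= mu),
        measurable_rule (Dmu k Is w alpha mustar) (Cmu k Is w alpha mustar) &
        (forall (D : X -> bool) (C : X -> 'I_n.+1),
           measurable_rule D C -> (G PX k Is alpha D C <= 0)%E ->
           (Pi PX k Is w D C <=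
              Pi PX k Is w (Dmu k Is w alpha mustar) (Cmu k Is w alpha mustar))%E)].
Proof.
pose Gm mu := G PX k Is alpha (Dmu k Is w alpha mu) (Cmu k Is w alpha mu).
pose S := [set mu : R | 0 <= mu /\ (Gm mu <= 0)%E].
have [m hm] := exists_neg.
have Sne : S !=set0 by exists m%:R; split => //; exact: ltW.
have Slb : lbound S 0 by move=> x [].
have hlb : has_lbound S by exists 0.
have hinf : has_inf S by split.
pose ms := inf S.
have ms0 : 0 <= ms := lb_le_inf Sne Slb.
have minim : forall mu, 0 <= mu -> (Gm mu <= 0)%E -> ms <= mu.
  by move=> mu h1 h2; exact: (ge_inf hlb (conj h1 h2)).
have Gms : (Gm ms <= 0)%E.
  have H : forall j : nat, exists s : R, S s /\ s < ms + j.+1%:R^-1.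
    move=> j.
    have hj : 0 < j.+1%:R^-1 :> R by rewrite invr_gt0 ltr0Sn.
    have [s Ss hs] := @inf_adherent _ S (j.+1%:R^-1) hj hinf.
    by exists s.
  have [s hs] := choice H.
  have cl : closeto s ms.
    apply: (@close_of _ s ms 1) => j.
    have [Ssj lt] := hs j.
    have le : ms <= s j := ge_inf hlb Ssj.
    by rewrite ger0_norm ?subr_ge0 // div1r lerBlDl ltW.
  apply: (lim_le0 _ _ (G_seq _ _ ms0 cl)) => j.
  by case: (hs j) => -[].
have slack : (ms%:E * Gm ms = 0)%E.
  case: (eqVneq ms 0) => [->|msn0]; first by rewrite mul0e.
  have msp : 0 < ms by rewrite lt0r msn0.
  pose t (j : nat) := ms - ms / j.+2%:R.
  have cl : closeto t ms.
    apply: (@close_of _ t ms ms) => j; rewrite /t.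
    rewrite (_ : ms - ms / j.+2%:R - ms = - (ms / j.+2%:R)); last by ring.
    rewrite normrN ger0_norm ?divr_ge0 //.
    rewrite ler_wpM2l ?(ltW msp) // lef_pV2 ?posrE ?ltr0Sn // ler_nat.
    by [].
  have Gpos : forall j, (0 < Gm (t j))%E.
    move=> j; rewrite ltNge; apply/negP => hle.
    have q0 : 0 < ms / j.+2%:R by rewrite divr_gt0 // ltr0Sn.
    have q1 : ms / j.+2%:R <= ms.
      by rewrite ler_pdivrMr ?ltr0Sn // ler_peMr ?ler1n // ltW.
    have t0 : 0 <= t j by rewrite /t subr_ge0.
    have := minim _ t0 hle; rewrite /t.
    by rewrite -subr_ge0 addrAC subrr add0r oppr_ge0 leNgt q0.
  have G0 : (0 <= Gm ms)%E := lim_ge0 _ _ (G_seq _ _ ms0 cl) Gpos.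
  have -> : Gm ms = 0%E by apply/le_anti; rewrite Gms G0.
  by rewrite mule0.
exists ms; split => //; first exact: mrule_mu.
by move=> D C hr hG; exact: opt.
Qed.

End Main.

Theorem theorem1 (R : realType) (dX dY : measure_display)
  (X : measurableType dX) (Y : measurableType dY)
  (PXY : probability (X * Y)%type R) (PX : probability X R)
  (k : R.-pker X ~> Y)
  (n : nat) (Is : 'I_n.+1 -> set Y) (w : 'I_n.+1 -> R) (B alpha : R) :
  (* P_XY is the joint law: X ~ PX and k is the conditional law of Y given X *)
  (forall (A : set X) (E : set Y), measurable A -> measurable E ->
     PXY (A `*` E) = (\int[PX]_(x in A) k x E)%E) ->
  0 < alpha < 1 ->
  (forall i, measurable (Is i)) ->
  injective Is ->
  (forall i, 0 < w i < B) ->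
  (0 < PX [set x | (1 - alpha < Tmax k Is x)%R])%E ->
  nonatomic PX ->
  (forall i (t : R), PX [set x | pC k (Is i) x = t] = 0%E) ->
  (forall i j, i != j -> forall (a b t : R), (a, b) != (0, 0) ->
     PX [set x | a * pC k (Is i) x + b * pC k (Is j) x = t] = 0%E) ->
  exists mustar : R,
    [/\ (* (1) mustar = min {mu >= 0 : G(D^mu, C^mu) <= 0} exists *)
        0 <= mustar,
        (G PX k Is alpha (Dmu k Is w alpha mustar) (Cmu k Is w alpha mustar)
           <= 0)%E,
        (forall mu, 0 <= mu ->
           (G PX k Is alpha (Dmu k Is w alpha mu) (Cmu k Is w alpha mu)
              <= 0)%E -> mustar <= mu),
        (* (2) the pair (D^mustar, C^mustar) is a feasible, optimal solution *)
        measurable_rule (Dmu k Is w alpha mustar) (Cmu k Is w alpha mustar) &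
        (forall (D : X -> bool) (C : X -> 'I_n.+1),
           measurable_rule D C -> (G PX k Is alpha D C <= 0)%E ->
           (Pi PX k Is w D C <=
              Pi PX k Is w (Dmu k Is w alpha mustar) (Cmu k Is w alpha mustar))%E)].
Proof.
move=> _ ha mIs _ hw hT _ hp1 hp2.
exact: (final PX k n Is w B alpha ha mIs hw hp1 hp2 hT).
Qed.
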